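(* Let $R$ be a commutative $k$-algebra with system of coordinates $(x_1,\ldots,x_n)$, $M=x_1R+\cdots+x_nR$, $R/M=k$, and assume $R$ is $M$-adically complete. Let $1\le m\le n$ and let $\hat D_m$, $\hat D_{m,n-m}$, $\hat E_{m,n-m}$ and the right action of $\hat E_{m,n-m}$ on $W_{m,n-m}=k[z_1^{-1},\ldots,z_m^{-1}]((z_{m+1}))\ldots((z_n))$ be as in the context. Then with $W_0=k[z_1^{-1},\ldots,z_n^{-1}]\subset W_{m,n-m}$, $$\hat D_{m,n-m}=\{A\in\hat E_{m,n-m}\;:\;W_0A\subseteq W_0\}.$$
   Context: $k$ is a field of characteristic zero. A system of coordinates of $R$ is a tuple $(x_1,\ldots,x_n)\in R^n$ such that $\mathrm{Der}_k(R)\to R^n$, $\delta\mapsto(\delta(x_i))_i$ is bijective and the common kernel of all derivations is $k$; $\partial_1,\ldots,\partial_n$ are the commuting derivations with $\partial_i(x_j)=\delta_{ij}$ (continuous derivations if $R$ is complete). $\hat D_m$ is the set of formal series $\sum_{\mathbf i\in\mathbb N^m}p_{\mathbf i}\partial_1^{i_1}\cdots\partial_m^{i_m}$, $p_{\mathbf i}\in R$, such that $p_{\mathbf i}\to0$ in the $M$-adic topology as $i_1+\cdots+i_m\to\infty$; it is an associative ring with multiplication given by the Leibniz rule. $\hat D_{m,n-m}=\hat D_m[\partial_{m+1},\ldots,\partial_n]$ and $\hat E_{m,n-m}=\hat D_m((\partial_{m+1}^{-1}))\ldots((\partial_n^{-1}))$ (iterated formal Laurent series in $\partial_j^{-1}$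 with coefficients written on the left, multiplication by the Leibniz rule $\partial^{i}a=\sum_{l\ge0}\binom{i}{l}\partial^l(a)\partial^{i-l}$, $\binom{i}{l}=i(i-1)\cdots(i-l+1)/l!$). The right action of $\hat E_{m,n-m}$ on $W_{m,n-m}$ comes from the identification $\hat E_{m,n-m}/M\hat E_{m,n-m}\simeq W_{m,n-m}$ sending the class of $p\,\partial_1^{i_1}\cdots\partial_n^{i_n}$ ($p\in R$) to $p(0)z_1^{-i_1}\cdots z_n^{-i_n}$, $p(0)$ the image of $p$ in $R/M=k$. *)

(* Defs.v *)
From HB Require Import structures.
From mathcomp Require Import all_boot all_order all_algebra.
Set Implicit Arguments. Unset Strict Implicit. Unset Printing Implicit Defensive.
Import Order.TTheory GRing.Theory Num.Theory.
Local Open Scope ring_scope.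

Section Defs.
Variables (k : fieldType) (R : comAlgType k) (n : nat) (x : 'I_n -> R).

Definition is_kder (d : R -> R) : Prop :=
  (forall r s, d (r + s) = d r + d s) /\
  (forall (c : k) r, d (c *: r) = c *: d r) /\
  (forall r s, d (r * s) = r * d s + d r * s).

Definition system_of_coordinates : Prop :=
  (forall d1 d2, is_kder d1 -> is_kder d2 ->
     (forall i, d1 (x i) = d2 (x i)) -> forall r, d1 r = d2 r) /\
  (forall v : 'I_n -> R, exists d, is_kder d /\ forall i, d (x i) = v i) /\
  (forall r, (forall d, is_kder d -> d r = 0) <-> exists c : k, r = c%:A).

Fixpoint memMpow (j : nat) (r : R) : Prop :=
  match j with
  | 0 => True
  | j'.+1 => exists f : 'I_n -> R, (forall i, memMpow j' (f i)) /\
                                    r = \sum_(i < n) x i * f i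
  end.

Definition memM (r : R) : Prop := memMpow 1 r.

Definition quotient_is_k : Prop :=
  (forall r, exists c : k, memM (r - c%:A)) /\
  (forall c : k, memM (c%:A) -> c = 0).

Definition Madic_complete : Prop :=
  (forall r, (forall j, memMpow j r) -> r = 0) /\
  (forall u : nat -> R,
     (forall j, exists N, forall p q, (N <= p)%N -> (N <= q)%N -> memMpow j (u p - u q)) ->
     exists l, forall j, exists N, forall p, (N <= p)%N -> memMpow j (u p - l)).

(* exponents of monomials d_1^{g_1} ... d_n^{g_n} *)
Definition expo := 'I_n -> int.

(* Elements of \hat E_{m,n-m} = \hat D_m((d_{m+1}^-1))...((d_n^-1)), given by
   their coefficient functions (coefficients written on the left). *)
Definition in_Ehat (m : nat) (A : expo -> R) : Prop :=
  (forall g : expo, (exists i : 'I_n, (i < m)%N /\ g i < 0) -> A g = 0) /\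
  (* iterated Laurent series: for each fixed outer exponents, the exponent
     of d_k is bounded above *)
  (forall (kk : 'I_n) (g0 : expo), (m <= kk)%N ->
     exists B : int, forall g : expo,
       (forall i : 'I_n, (kk < i)%N -> g i = g0 i) -> A g != 0 -> g kk <= B) /\
  (* each \hat D_m-coefficient has coefficients tending to 0 M-adically *)
  (forall (g0 : expo) (j : nat), exists N : int, forall g : expo,
     (forall i : 'I_n, (m <= i)%N -> g i = g0 i) ->
     N <= \sum_(i < n | (i < m)%N) g i -> memMpow j (A g)).

Definition in_Dhat (m : nat) (A : expo -> R) : Prop :=
  in_Ehat m A /\
  exists B : int, forall g : expo, A g != 0 ->
    forall i : 'I_n, (m <= i)%N -> 0 <= g i <= B.

Definition dpow (d : 'I_n -> R -> R) (l : 'I_n -> nat) (r : R) : R :=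
  foldr (fun i s => iter (l i) (d i) s) r (enum 'I_n).

(* Coefficient of z^{-g} in z^{-a} . A (right action of \hat E_{m,n-m} on
   W_{m,n-m}), for a in N^n: the class of d^a A modulo M \hat E, where
   d^a (p d^b) = sum_{l <= a} binom(a,l) d^l(p) d^{a-l+b}. *)
Definition mono_act (d : 'I_n -> R -> R) (ev : R -> k) (a : 'I_n -> nat)
    (A : expo -> R) (g : expo) : k :=
  let bnd := (\sum_(i < n) a i)%N in
  \sum_(l : {ffun 'I_n -> 'I_bnd.+1})
     (\prod_(i < n) ('C(a i, l i))%:R) *
     ev (dpow d (fun i => nat_of_ord (l i))
            (A (fun i => g i - (a i)%:Z + (nat_of_ord (l i))%:Z))).

(* An element of W_0 = k[z_1^-1,...,z_n^-1], written as a finite list of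
   terms (a, c) standing for c z^{-a}; its image under A. *)
Definition W0_act (d : 'I_n -> R -> R) (ev : R -> k)
    (w : seq (('I_n -> nat) * k)) (A : expo -> R) (g : expo) : k :=
  \sum_(t <- w) t.2 * mono_act d ev t.1 A g.

(* an element of W_{m,n-m} (given by coefficients of z^{-g}) lies in W_0 *)
Definition in_W0 (f : expo -> k) : Prop :=
  exists B : int, forall g : expo, f g != 0 -> forall i, 0 <= g i <= B.

End Defs.

(* Main.v *)
Require Import Defs.
From HB Require Import structures.
From mathcomp Require Import all_boot all_order all_algebra.
From mathcomp Require Import zify ring lra.
From Stdlib Require Import FunctionalExtensionality.
Import Order.TTheory GRing.Theory Num.Theory.
Local Open Scope ring_scope.
Set Implicit Arguments. Unset Strict Implicit.

Section M.
Variables (k : fieldType) (R : comAlgType k) (n : nat) (x : 'I_n -> R).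

Lemma M0 j : memMpow x j 0.
Proof.
elim: j => [|j IH] //=; exists (fun _ => 0); split => //.
by rewrite big1 // => i _; rewrite mulr0.
Qed.

Lemma MD j r s : memMpow x j r -> memMpow x j s -> memMpow x j (r + s).
Proof.
elim: j r s => [|j IH] r s //= [f [Hf ->]] [g [Hg ->]].
exists (fun i => f i + g i); split; first by move=> i; apply: IH.
by rewrite -big_split /=; apply: eq_bigr => i _; rewrite mulrDr.
Qed.

Lemma MM j r s : memMpow x j r -> memMpow x j (s * r).
Proof.
elim: j r s => [|j IH] r s //= [f [Hf ->]].
exists (fun i => s * f i); split; first by move=> i; apply: IH.
by rewrite mulr_sumr; apply: eq_bigr => i _; rewrite mulrCA.
Qed.

Lemma MN j r : memMpow x j r -> memMpow x j (- r).
Proof. by move=> H; rewrite -mulN1r; apply: MM. Qed.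

Lemma MB j r s : memMpow x j r -> memMpow x j s -> memMpow x j (r - s).
Proof. by move=> H1 H2; apply: MD => //; apply: MN. Qed.

Lemma MZ j (c : k) r : memMpow x j r -> memMpow x j (c *: r).
Proof. by move=> H; rewrite -mulr_algl; apply: MM. Qed.

Lemma Msum j (I : Type) (s : seq I) (F : I -> R) :
  (forall i, memMpow x j (F i)) -> memMpow x j (\sum_(i <- s) F i).
Proof.
move=> H; elim: s => [|a s IH]; first by rewrite big_nil; apply: M0.
by rewrite big_cons; apply: MD.
Qed.

Lemma Mx j i r : memMpow x j r -> memMpow x j.+1 (x i * r).
Proof.
move=> H /=; exists (fun l => if l == i then r else 0); split.
  by move=> l; case: eqP => _ //; apply: M0.
rewrite (bigD1 i) //= eqxx big1 ?addr0 // => l /negbTE ->; by rewrite mulr0.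
Qed.

Lemma Mmono1 j r : memMpow x j.+1 r -> memMpow x j r.
Proof.
elim: j r => [|j IH] r //= [f [Hf ->]].
by exists f; split => // i; apply: IH.
Qed.

Lemma Mmono j j' r : (j <= j')%N -> memMpow x j' r -> memMpow x j r.
Proof.
move=> /subnK <-; elim: (j' - j)%N => [|t IH] //= H.
by apply: IH; apply: Mmono1.
Qed.

Lemma kder0 (dd : R -> R) : is_kder dd -> dd 0 = 0.
Proof.
move=> [Ha _]; have := Ha 0 0; rewrite addr0 -{1}(addr0 (dd 0)).
move=> h; exact: (esym (addrI _ h)).
Qed.

Lemma kderN (dd : R -> R) r : is_kder dd -> dd (- r) = - dd r.
Proof.
move=> H; have := (proj1 H) r (- r); rewrite subrr kder0 // => /eqP.
by rewrite eq_sym addrC addr_eq0 => /eqP.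
Qed.

Lemma kder_sum (dd : R -> R) (I : Type) (s : seq I) (F : I -> R) :
  is_kder dd -> dd (\sum_(i <- s) F i) = \sum_(i <- s) dd (F i).
Proof.
move=> H; elim: s => [|a s IH]; first by rewrite !big_nil kder0.
by rewrite !big_cons (proj1 H) IH.
Qed.

Lemma kder_nat (dd : R -> R) c : is_kder dd -> dd c%:R = 0.
Proof.
move=> H; have d1 : dd 1 = 0.
  have := (proj2 (proj2 H)) 1 1; rewrite mul1r mulr1 -{1}(addr0 (dd 1)).
  by rewrite mul1r => h; exact: (esym (addrI _ h)).
elim: c => [|c IH]; first by rewrite kder0.
by rewrite -addn1 natrD (proj1 H) d1 IH addr0.
Qed.

Lemma Mder (dd : R -> R) j r :
  is_kder dd -> memMpow x j.+1 r -> memMpow x j (dd r).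
Proof.
move=> H; elim: j r => [|j IH] r; first done.
move=> [f [Hf ->]].
rewrite kder_sum //; apply: Msum => i.
rewrite (proj2 (proj2 H)); apply: MD; last by apply: MM.
by apply: Mx; apply: IH.
Qed.

End M.

Section D.
Variables (k : fieldType) (R : comAlgType k) (n : nat) (x : 'I_n -> R)
  (d : 'I_n -> R -> R) (ev : R -> k).
Hypotheses (hch : [pchar k] =i pred0) (hsc : system_of_coordinates x)
  (hq : quotient_is_k x) (hc : Madic_complete x)
  (hd : forall i, is_kder (d i)) (hdx : forall i j, d i (x j) = (i == j)%:R)
  (hev : forall r, memM x (r - (ev r)%:A)).

Lemma ev_uniq r c : memM x (r - c%:A) -> ev r = c.
Proof.
move=> H; have := MB H (hev r).
have -> : r - c%:A - (r - (ev r)%:A) = (ev r - c)%:A by rewrite scalerBl; ring.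
by move=> /(proj2 hq) /eqP; rewrite subr_eq0 => /eqP.
Qed.

Lemma ev_M r : memM x r -> ev r = 0.
Proof. by move=> H; apply: ev_uniq; rewrite scale0r subr0. Qed.

Lemma M_ev r : ev r = 0 -> memM x r.
Proof. by move=> H; have := hev r; rewrite H scale0r subr0. Qed.

Lemma dcomm i j r : d i (d j r) = d j (d i r).
Proof.
have H := (proj1 hsc) (fun r => d i (d j r) - d j (d i r)) (fun _ => 0).
apply/eqP; rewrite -subr_eq0; apply/eqP; apply: H.
- split; [|split].
  + by move=> a b; rewrite !(proj1 (hd _)); ring.
  + by move=> c a; rewrite !(proj1 (proj2 (hd _))) scalerBr.
  + move=> a b; rewrite !(proj2 (proj2 (hd _))) !(proj1 (hd _)).
    rewrite !(proj2 (proj2 (hd _))); ring.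
- by split; [|split] => *; rewrite ?addr0 ?scaler0 ?mulr0 ?mul0r ?addr0.
- by move=> l; rewrite !hdx !kder_nat // subrr.
Qed.

Lemma dpow_ext l l' r : (forall i, l i = l' i) -> dpow d l r = dpow d l' r.
Proof. by move=> H; have -> : l = l' by apply: functional_extensionality. Qed.

Lemma dpow0 r : dpow d (fun _ => 0%N) r = r.
Proof. by rewrite /dpow; elim: (enum 'I_n) => //= a s ->. Qed.

Lemma iter_comm i j c r : d i (iter c (d j) r) = iter c (d j) (d i r).
Proof. by elim: c => //= c <-; rewrite dcomm. Qed.

Lemma dpow_commd i l r : d i (dpow d l r) = dpow d l (d i r).
Proof. by rewrite /dpow; elim: (enum 'I_n) => //= a s <-; rewrite iter_comm. Qed.

Lemma dpow_S i l r :
  dpow d (fun j => (l j + (j == i))%N) r = d i (dpow d l r).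
Proof.
rewrite /dpow.
have : forall s : seq 'I_n,
  foldr (fun j t => iter (l j + (j == i)) (d j) t) r s =
  iter (count_mem i s) (d i) (foldr (fun j t => iter (l j) (d j) t) r s).
  elim=> [|a s IH] //=; rewrite IH.
  case: (eqVneq a i) => [->|ne] /=.
    by rewrite add0n addn1 iterS -!iterD addnC.
  idtac.
  by elim: (l a) => //= c ->; rewrite iter_comm.
move=> ->; rewrite count_uniq_mem ?enum_uniq // mem_enum //.
Qed.

Lemma Miter (dd : R -> R) c j r :
  is_kder dd -> memMpow x (j + c) r -> memMpow x j (iter c dd r).
Proof.
move=> H; elim: c j r => [|c IH] j r /=; first by rewrite addn0.
move=> Hr; apply: (Mder H); apply: IH; by rewrite addnS -addSn in Hr.
Qed.

Lemma Mdpow l j r :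
  memMpow x (j + \sum_(i < n) l i) r -> memMpow x j (dpow d l r).
Proof.
rewrite /dpow -big_enum /=.
elim: (enum 'I_n) j => [|a s IH] j; first by rewrite big_nil addn0.
rewrite big_cons /= => H; apply: Miter => //; apply: IH.
by rewrite -addnA.
Qed.

Definition E r := \sum_(i < n) x i * d i r.

Lemma Euler j r : memMpow x j r -> memMpow x j.+1 (E r - r *+ j).
Proof.
elim: j r => [|j IH] r.
  by move=> _; rewrite mulr0n subr0 /=; exists (fun i => d i r).
move=> [f [Hf ->]].
exists (fun i => E (f i) - f i *+ j); split; first by move=> i; apply: IH; apply: Hf.
have e1 : forall kk, d kk (\sum_(i < n) x i * f i) =
    \sum_(i < n) x i * d kk (f i) + f kk.
  move=> kk; rewrite kder_sum //.
  under eq_bigr do rewrite (proj2 (proj2 (hd _))) hdx.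
  rewrite big_split /=; congr (_ + _).
  rewrite (bigD1 kk) //= eqxx mul1r big1 ?addr0 // => i.
  by rewrite eq_sym => /negbTE ->; rewrite mul0r.
rewrite /E; under eq_bigr do rewrite e1 mulrDr.
rewrite big_split /=.
under [in RHS]eq_bigr do rewrite mulrBr mulr_sumr mulrnAr.
rewrite sumrB sumrMnl.
have -> : \sum_(i < n) x i * (\sum_(i0 < n) x i0 * d i (f i0)) =
          \sum_(i < n) \sum_(j0 < n) x i * (x j0 * d j0 (f i)).
  under eq_bigr do rewrite mulr_sumr.
  rewrite exchange_big /=; apply: eq_bigr => i _; apply: eq_bigr => j0 _.
  by rewrite mulrCA.
by rewrite mulrS; ring.
Qed.

Lemma S_zero r : (forall l, ev (dpow d l r) = 0) -> r = 0.
Proof.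
have key : forall j r, (forall l, ev (dpow d l r) = 0) -> memMpow x j.+1 r.
  elim=> [|j IH] {}r Hr.
    by apply: M_ev; have := Hr (fun _ => 0%N); rewrite dpow0.
  have Hr1 := IH _ Hr.
  have Hdr : forall i, memMpow x j.+1 (d i r).
    move=> i; apply: IH => l.
    by rewrite -dpow_commd -dpow_S.
  have HE : memMpow x j.+2 (E r) by apply: Msum => i; apply: Mx.
  have HEu := Euler Hr1.
  have Hm : memMpow x j.+2 (r *+ j.+1).
    by have := MB HE HEu; rewrite opprB addrC subrK.
  have nz : (j.+1%:R : k) != 0 by move/pcharf0P: hch => ->.
  have -> : r = (j.+1%:R : k)^-1 *: (r *+ j.+1).
    by rewrite -scaler_nat scalerA mulVf // scale1r.
  by apply: MZ.
move=> H; apply: (proj1 hc) => j.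
case: j => [|j] //; exact: key.
Qed.

End D.

Lemma finite_max (T : finType) (P : T -> int -> Prop) :
  (forall h N N', P h N -> N <= N' -> P h N') ->
  (forall h, exists N, P h N) -> exists N, forall h, P h N.
Proof.
move=> Hm He.
have : forall s : seq T, exists N, forall h, h \in s -> P h N.
  elim=> [|a s [N IH]]; first by exists 0.
  have [N1 H1] := He a.
  exists (Num.max N1 N) => h; rewrite in_cons => /orP [/eqP ->|hs].
    by apply: Hm H1 _; rewrite le_max lexx.
  by apply: Hm (IH _ hs) _; rewrite le_max lexx orbT.
move=> /(_ (enum T)) [N HN]; exists N => h; apply: HN; by rewrite mem_enum.
Qed.

Lemma leq_sum1 n (l : 'I_n -> nat) i : (l i <= \sum_(j < n) l j)%N.
Proof. by rewrite (bigD1 i) //= leq_addr. Qed.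

Section Main.
Variables (k : fieldType) (R : comAlgType k) (n : nat) (x : 'I_n -> R)
  (d : 'I_n -> R -> R) (ev : R -> k) (m : nat).
Hypotheses (hch : [pchar k] =i pred0) (hsc : system_of_coordinates x)
  (hq : quotient_is_k x) (hc : Madic_complete x)
  (hd : forall i, is_kder (d i)) (hdx : forall i j, d i (x j) = (i == j)%:R)
  (hev : forall r, memM x (r - (ev r)%:A)) (hm1 : (1 <= m)%N) (hmn : (m <= n)%N).
Variable A : expo n -> R.
Hypothesis hE : in_Ehat x m A.

Section Back.
Hypothesis hW : forall w : seq (('I_n -> nat) * k), in_W0 (W0_act d ev w A).

Lemma mono_act_top (l : 'I_n -> nat) (b : expo n) :
  (forall l' : 'I_n -> nat, (forall i, (l' i <= l i)%N) -> (exists i, (l' i < l i)%N) ->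
     ev (dpow d l' (A (fun i => b i - (l i)%:Z + (l' i)%:Z))) = 0) ->
  mono_act d ev l A b = ev (dpow d l (A b)).
Proof.
move=> H; rewrite /mono_act.
set bnd := (\sum_(i < n) l i)%N.
pose l0 : {ffun 'I_n -> 'I_bnd.+1} := [ffun i => inord (l i)].
have l0E : forall i, (l0 i : nat) = l i.
  by move=> i; rewrite ffunE inordK // ltnS leq_sum1.
rewrite (bigD1 l0) //= [X in _ + X]big1; last first.
  move=> l' ne.
  case: (boolP [forall i, (l' i <= l i)%N]) => [/forallP hle|/forallPn [i]].
    rewrite H ?mulr0 //.
    apply/existsP; apply: contraT; rewrite negb_exists => /forallP hn.
    have E0 : l' == l0.
      apply/eqP/ffunP => i; apply/val_inj.
      rewrite /= l0E; apply/eqP; rewrite eqn_leq hle /=.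
      by have := hn i; rewrite -leqNgt.
    by rewrite E0 in ne.
  by rewrite -ltnNge => hlt; rewrite (bigD1 i) //= bin_small // mul0r mul0r.
rewrite big1 ?mul1r; last by move=> i _; rewrite l0E binn.
rewrite addr0.
have -> : (fun i => nat_of_ord (l0 i)) = l by apply: functional_extensionality.
congr (ev (dpow _ _ (A _))).
by apply: functional_extensionality => i; rewrite l0E subrK.
Qed.


Lemma sum_lt (l l' : 'I_n -> nat) :
  (forall i, (l' i <= l i)%N) -> (exists i, (l' i < l i)%N) ->
  (\sum_(i < n) l' i < \sum_(i < n) l i)%N.
Proof.
move=> hle [i hi]; rewrite (bigD1 i) //= [X in (_ < X)%N](bigD1 i) //=.
have : (\sum_(j < n | j != i) l' j <= \sum_(j < n | j != i) l j)%N.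
  by apply: leq_sum => j _.
by move=> h; rewrite -addSn; apply: leq_add.
Qed.

Lemma low_step (l : 'I_n -> nat) :
  (forall (l' : 'I_n -> nat) (b' : expo n) (i0 : 'I_n),
     (\sum_(i < n) l' i < \sum_(i < n) l i)%N -> (m <= i0)%N -> b' i0 < 0 ->
     ev (dpow d l' (A b')) = 0) ->
  forall (b : expo n) (i0 : 'I_n), (m <= i0)%N -> b i0 < 0 -> ev (dpow d l (A b)) = 0.
Proof.
move=> IH b i0 hi0 hb; apply/eqP; apply: contraT => hne.
have [Bw HB] := hW [:: (l, 1)].
have eqW : W0_act d ev [:: (l, 1)] A b = ev (dpow d l (A b)).
  rewrite /W0_act big_seq1 /= mul1r; apply: mono_act_top => l' hle hex.
  apply: (IH _ _ i0) => //; first exact: sum_lt.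
  have := hle i0; move: hb; lia.
have := HB b; rewrite eqW => /(_ hne i0) /andP [h0 _].
by move: hb; rewrite ltNge h0.
Qed.

Lemma low_l N : forall (l : 'I_n -> nat) (b : expo n) (i0 : 'I_n),
  (\sum_(i < n) l i <= N)%N -> (m <= i0)%N -> b i0 < 0 -> ev (dpow d l (A b)) = 0.
Proof.
elim: N => [|N IH] l b i0 hN; apply: low_step => l' b' i1 hlt.
  by move: hlt hN; lia.
by apply: IH; move: hlt hN; lia.
Qed.

Lemma lowerA (g : expo n) : A g != 0 -> forall i : 'I_n, (m <= i)%N -> 0 <= g i.
Proof.
move=> hA i hi; rewrite leNgt; apply/negP => hg.
move/eqP: hA; apply; apply: (S_zero hch hsc hc hd hdx hev) => l.
exact: (@low_l _ l g i (leqnn _) hi hg).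
Qed.

Lemma upper : exists B : int, forall g : expo n, A g != 0 ->
  forall i : 'I_n, (m <= i)%N -> g i <= B.
Proof.
have step : forall t, (t <= n - m)%N -> exists B : int, forall g : expo n,
    A g != 0 -> forall i : 'I_n, (n - t <= i)%N -> g i <= B.
  elim=> [|t IH] ht.
    by exists 0 => g _ i; rewrite subn0 => hi; have := ltn_ord i; lia.
  have [B HB] := IH (ltnW ht).
  have hcn : (n - t.+1 < n)%N by lia.
  have hmc : (m <= n - t.+1)%N by lia.
  pose kk := Ordinal hcn.
  pose B' := Num.max B 0.
  pose Bn := `|B'|%N.
  pose g0 (h : {ffun 'I_n -> 'I_Bn.+1}) : expo n := fun i => ((h i : nat)%:Z).
  have [Bk HBk] := @finite_max _ (fun h Bh => forall g : expo n,
     (forall i : 'I_n, (kk < i)%N -> g i = g0 h i) -> A g != 0 -> g kk <= Bh)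
     (fun h N N' H hNN' g hg hA => le_trans (H g hg hA) hNN')
     (fun h => (proj1 (proj2 hE)) kk (g0 h) hmc).
  exists (Num.max B Bk) => g hA i hi.
  have hBB' : B <= B' by rewrite le_max lexx.
  have hB'0 : 0 <= B' by rewrite le_max lexx orbT.
  have hBn : (Bn%:Z = B') by rewrite /Bn gez0_abs.
  case: (ltngtP (n - t.+1) i) => [hlt|hgt|heq].
  - apply: le_trans (HB g hA i _) _; first lia.
    by rewrite le_max lexx.
  - by move: hi hgt; lia.
  - pose h : {ffun 'I_n -> 'I_Bn.+1} :=
      [ffun j : 'I_n => inord (if (kk < j)%N then `|g j|%N else 0%N)].
    have Hg := HBk h g.
    have -> : i = kk by apply/val_inj; rewrite /= heq.
    apply: le_trans (Hg _ hA) _; last by rewrite le_max lexx orbT.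
    move=> j hj; rewrite /g0 /h ffunE hj.
    have h0 : 0 <= g j by apply: (lowerA hA); move: hj hmc => /= ; lia.
    have h1 : g j <= B by apply: (HB g hA); move: hj => /=; lia.
    rewrite inordK; first by rewrite gez0_abs.
    move: h0 h1 hBB' hBn; lia.
have [B HB] := step (n - m)%N (leqnn _).
by exists B => g hA i hi; apply: (HB g hA); rewrite subKn.
Qed.

Lemma back : in_Dhat x m A.
Proof.
split => //; have [B HB] := upper; exists B => g hA i hi.
by rewrite (lowerA hA hi) (HB g hA i hi).
Qed.

End Back.
Section Fwd.
Hypothesis hD : in_Dhat x m A.

Lemma sum_neq0 (T : finType) (F : T -> k) : \sum_(t : T) F t != 0 -> exists t, F t != 0.
Proof.
move=> H; case: (boolP [exists t, F t != 0]) => [/existsP //|].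
rewrite negb_exists => /forallP Hf; move/eqP: H; case.
by apply: big1 => t _; apply/eqP; have := Hf t; rewrite negbK.
Qed.

Lemma fwd_mono (a : 'I_n -> nat) : in_W0 (mono_act d ev a A).
Proof.
have [_ [B HB]] := hD.
set J := (\sum_(i < n) a i).+1.
pose Bn := `|Num.max B 0|%N.
pose g0 (h : {ffun 'I_n -> 'I_Bn.+1}) : expo n := fun i => ((h i : nat)%:Z).
have [N HN] := @finite_max _ (fun h N => forall g : expo n,
   (forall i : 'I_n, (m <= i)%N -> g i = g0 h i) ->
   N <= \sum_(i < n | (i < m)%N) g i -> memMpow x J (A g))
   (fun h N N' H hNN' g hg hs => H g hg (le_trans hNN' hs))
   (fun h => (proj2 (proj2 hE)) (g0 h) J).
exists (Num.max N B + (\sum_(i < n) a i)%N%:Z) => g hne.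
rewrite /mono_act in hne; have [l hl] := sum_neq0 hne.
have hle : forall i, (l i <= a i)%N.
  move=> i; rewrite leqNgt; apply/negP => hlt; move: hl.
  by rewrite (bigD1 i) //= bin_small // mul0r mul0r eqxx.
set b : expo n := (fun i => g i - (a i)%:Z + (l i : nat)%:Z) in hl.
have hev0 : ev (dpow d (fun i => nat_of_ord (l i)) (A b)) != 0.
  by apply: contraNneq hl => ->; rewrite mulr0.
have hnM : ~ memMpow x J (A b).
  move=> hM; move/eqP: hev0; apply; apply: (ev_M hq hev).
  apply: (Mdpow hd); apply: (Mmono _ hM).
  by rewrite add1n ltnS; apply: leq_sum => i _.
have hAb : A b != 0.
  by apply/eqP => h0; apply: hnM; rewrite h0; apply: M0.
pose h : {ffun 'I_n -> 'I_Bn.+1} :=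
  [ffun j : 'I_n => inord (if (m <= j)%N then `|b j|%N else 0%N)].
have hsum : \sum_(i < n | (i < m)%N) b i < N.
  rewrite ltNge; apply/negP => hN; apply: hnM; apply: (HN h) => // j hj.
  have := HB b hAb j hj => /andP [h0 h1].
  rewrite /g0 /h ffunE hj inordK; first by rewrite gez0_abs.
  have hB0 : B <= Num.max B 0 by rewrite le_max lexx.
  have : (`|Num.max B 0|%N%:Z = Num.max B 0) by rewrite gez0_abs // le_max lexx orbT.
  move: h0 h1 hB0; lia.
have hin : forall i : 'I_n, (i < m)%N -> 0 <= b i.
  move=> i hi; rewrite leNgt; apply/negP => hbi; move/eqP: hAb; apply.
  by apply: (proj1 hE); exists i.
move=> i.
have hgi : g i = b i + (a i)%:Z - (l i : nat)%:Z by rewrite /b; ring.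
have hla := hle i; have hsa := leq_sum1 a i.
have hNm : N <= Num.max N B by rewrite le_max lexx.
have hBm : B <= Num.max N B by rewrite le_max lexx orbT.
case: (ltnP i m) => him.
- have hbi := hin i him.
  have : b i <= \sum_(i < n | (i < m)%N) b i.
    rewrite (bigD1 i) //= lerDl; apply: sumr_ge0 => j /andP [hj _].
    exact: hin.
  move: hgi hla hsa hNm hbi hsum; lia.
- have := HB b hAb i him => /andP [h0 h1].
  move: hgi hla hsa hBm h0 h1; lia.
Qed.

Lemma fwd : forall w, in_W0 (W0_act d ev w A).
Proof.
elim=> [|t w [Bw HBw]].
  by exists 0 => g; rewrite /W0_act big_nil eqxx.
have [Bt HBt] := fwd_mono t.1.
exists (Num.max Bt Bw) => g; rewrite /W0_act big_cons -/(W0_act d ev w A g).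
move=> hne i.
have hBt : Bt <= Num.max Bt Bw by rewrite le_max lexx.
have hBw : Bw <= Num.max Bt Bw by rewrite le_max lexx orbT.
case: (eqVneq (mono_act d ev t.1 A g) 0) => h0.
  rewrite h0 mulr0 add0r in hne.
  by have := HBw g hne i => /andP [-> /le_trans ->].
by have := HBt g h0 i => /andP [-> /le_trans ->].
Qed.

End Fwd.

End Main.

Theorem proposition2 (k : fieldType) (R : comAlgType k) (n : nat)
    (x : 'I_n -> R) (m : nat)
    (d : 'I_n -> R -> R) (ev : R -> k) :
  [pchar k] =i pred0 ->
  system_of_coordinates x ->
  quotient_is_k x ->
  Madic_complete x ->
  (1 <= m)%N -> (m <= n)%N ->
  (forall i, is_kder (d i)) ->
  (forall i j, d i (x j) = (i == j)%:R) ->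
  (forall r, memM x (r - (ev r)%:A)) ->
  forall A : expo n -> R, in_Ehat x m A ->
    (in_Dhat x m A <->
     forall w : seq (('I_n -> nat) * k), in_W0 (W0_act d ev w A)).
Proof.
move=> hch hsc hq hc hm1 hmn hd hdx hev A hE; split.
  exact: (@fwd k R n x d ev m hq hd hev hm1 hmn A hE).
exact: (@back k R n x d ev m hch hsc hc hd hdx hev hm1 hmn A hE).
Qed.
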